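(* Let $K=\mathbb{Q}(\sqrt{d})$, where $d>1$ is square-free and $d=m^2+r$ with $m,r$ integers, $m>0$, $-m<r\le m$ and $4m\equiv 0 \pmod r$ (i.e. $K$ is of Richaud–Degert type). Suppose that either $d\equiv 2,3 \pmod 4$, or $d\equiv 1\pmod 4$ and $m$ is odd. If $K$ is not unit reducible, then $n_K=2$.
   Context: For a totally real number field $K$ with ring of integers $\mathcal{O}_K$ and unit group $\mathcal{O}_K^\times$, let $K_{>>0}$ be the set of totally positive elements. For $a\in K_{>>0}$, $\mu(a)=\min_{x\in\mathcal{O}_K\setminus\{0\}}\mathrm{Tr}_{K/\mathbb{Q}}(ax^2)$ and $\mathcal{M}(a)=\{x\in\mathcal{O}_K:\mathrm{Tr}_{K/\mathbb{Q}}(ax^2)=\mu(a)\}$. $K$ is unit reducible if $\mu(a)=\min_{u\in\mathcal{O}_K^\times}\mathrm{Tr}_{K/\mathbb{Q}}(au^2)$ for all $a\in K_{>>0}$. The unary form $ax^2$ is perfect if $a$ is the only $b\in K_{>>0}$ with $\mathrm{Tr}_{K/\mathbb{Q}}(bv^2)=\mu(a)$ for all $v\in\mathcal{M}(a)$. Forms $ax^2,bx^2$ are equivalent if $b=au^2$ for some $u\in\mathcal{O}_K^\times$, homothetic if $b=\lambda a$ with rational $\lambda>0$; $n_K$ is the number of classes of perfect unary forms up to equivalence and homothety. *)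

(* Defs.v *)
(* The real quadratic field K = Q(sqrt d) is modelled concretely:
   an element a + b*sqrt(d) (a b : rat) is the pair (a, b). *)
From mathcomp Require Import all_boot all_order all_algebra.
Set Implicit Arguments. Unset Strict Implicit. Unset Printing Implicit Defensive.
Import Order.TTheory GRing.Theory Num.Theory.
Local Open Scope ring_scope.

Definition qf := (rat * rat)%type.

Section QuadField.
Variable d : nat.

Definition qadd (x y : qf) : qf := (x.1 + y.1, x.2 + y.2).
Definition qmul (x y : qf) : qf :=
  (x.1 * y.1 + d%:R * (x.2 * y.2), x.1 * y.2 + x.2 * y.1).
Definition qscale (l : rat) (x : qf) : qf := (l * x.1, l * x.2).
Definition qsq (x : qf) : qf := qmul x x.
Definition qzero : qf := (0, 0).
Definition qone : qf := (1, 0).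

Definition qtr (x : qf) : rat := 2 * x.1.
Definition qnorm (x : qf) : rat := x.1 ^+ 2 - d%:R * x.2 ^+ 2.

(* ring of integers: x is an algebraic integer iff its characteristic polynomial
   X^2 - Tr(x) X + N(x) has integer coefficients *)
Definition inOK (x : qf) : Prop := qtr x \is a Num.int /\ qnorm x \is a Num.int.

Definition isunit (u : qf) : Prop := inOK u /\ exists v, inOK v /\ qmul u v = qone.

(* totally positive: both real conjugates a + b sqrt d, a - b sqrt d are > 0,
   i.e. their sum (trace) and product (norm) are > 0 *)
Definition totpos (a : qf) : Prop := 0 < qtr a /\ 0 < qnorm a.

Definition is_mu (a : qf) (m : rat) : Prop :=
  (exists x, inOK x /\ x <> qzero /\ qtr (qmul a (qsq x)) = m) /\
  (forall x, inOK x -> x <> qzero -> m <= qtr (qmul a (qsq x))).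

Definition in_min_vectors (a : qf) (m : rat) (x : qf) : Prop :=
  inOK x /\ qtr (qmul a (qsq x)) = m.

Definition unit_reducible : Prop :=
  forall a, totpos a -> forall m, is_mu a m ->
    exists u, isunit u /\ qtr (qmul a (qsq u)) = m.

(* the unary form a x^2 is perfect *)
Definition perfect (a : qf) : Prop :=
  totpos a /\ exists m, is_mu a m /\
    forall b, totpos b ->
      (forall v, in_min_vectors a m v -> qtr (qmul b (qsq v)) = m) -> b = a.

Definition equiv_hom (a b : qf) : Prop :=
  exists u lam, isunit u /\ 0 < lam /\ b = qscale lam (qmul a (qsq u)).

Definition nK_eq2 : Prop :=
  exists a1 a2, perfect a1 /\ perfect a2 /\ ~ equiv_hom a1 a2 /\
    forall a, perfect a -> equiv_hom a1 a \/ equiv_hom a2 a.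

End QuadField.

(* Main.v *)
Require Import Defs.
From mathcomp Require Import all_boot all_order all_algebra.
From mathcomp Require Import ring lra zify.
Import Order.TTheory GRing.Theory Num.Theory.
Local Open Scope ring_scope.

Definition qconj (x : qf) : qf := (x.1, - x.2).
Definition Delta (c e : qf) : rat := c.2 * e.1 - c.1 * e.2.

Section QF.
Variable d : nat.
Local Notation D := (d%:R : rat).
Local Notation qm := (qmul d).

Definition qpow (x : qf) (n : nat) : qf := iter n (qm x) qone.

Ltac qunf := rewrite /qsq /qmul /qadd /qscale /qone /qzero /qtr /qnorm /qconj /Delta /=.
Ltac qcase := repeat match goal with | x : qf |- _ => destruct x end.
Ltac qring := qcase; qunf; try (congr pair); ring.

Lemma qmulC x y : qm x y = qm y x. Proof. qring. Qed.
Lemma qmulA x y z : qm x (qm y z) = qm (qm x y) z. Proof. qring. Qed.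
Lemma qmul1 x : qm qone x = x. Proof. qring. Qed.
Lemma qmulx1 x : qm x qone = x. Proof. qring. Qed.
Lemma qsq_mul x y : qsq d (qm x y) = qm (qsq d x) (qsq d y). Proof. qring. Qed.
Lemma qconj_mul x y : qconj (qm x y) = qm (qconj x) (qconj y). Proof. qring. Qed.
Lemma qconj_sq x : qconj (qsq d x) = qsq d (qconj x). Proof. qring. Qed.
Lemma qconjK x : qconj (qconj x) = x. Proof. qring. Qed.
Lemma qnorm_mul x y : qnorm d (qm x y) = qnorm d x * qnorm d y. Proof. qring. Qed.
Lemma qnorm_conj x : qnorm d (qconj x) = qnorm d x. Proof. qring. Qed.
Lemma qtr_conj x : qtr (qconj x) = qtr x. Proof. qring. Qed.
Lemma qnorm_sq x : qnorm d (qsq d x) = (qnorm d x)^+2. Proof. qring. Qed.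
Lemma trconj a y : qtr (qm (qconj a) y) = qtr (qm a (qconj y)). Proof. qring. Qed.
Lemma trmulsq a u x : qtr (qm (qm a (qsq d u)) (qsq d x)) = qtr (qm a (qsq d (qm u x))).
Proof. qring. Qed.
Lemma tr_lin l c m e y : qtr (qm (qadd (qscale l c) (qscale m e)) y) =
   l * qtr (qm c y) + m * qtr (qm e y). Proof. qring. Qed.
Lemma tr_scale l c y : qtr (qm (qscale l c) y) = l * qtr (qm c y). Proof. qring. Qed.
Lemma Delta_unit c e u : Delta (qm c (qsq d u)) (qm e (qsq d u)) = (qnorm d u)^+2 * Delta c e.
Proof. qring. Qed.
Lemma Delta_conj c e : Delta (qconj c) (qconj e) = - Delta c e. Proof. qring. Qed.
Lemma Delta_anti c e : Delta c e = - Delta e c. Proof. qring. Qed.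
Lemma Delta_id p q r : Delta q r * p.1 + Delta r p * q.1 + Delta p q * r.1 = 0.
Proof. qring. Qed.

Lemma cramer a c e : Delta c e != 0 ->
  a = qadd (qscale (Delta a e / Delta c e) c) (qscale (Delta c a / Delta c e) e).
Proof. move=> H; qcase; move: H; qunf => H; congr pair; field; done. Qed.

Lemma qpowS x n : qpow x n.+1 = qm x (qpow x n). Proof. by []. Qed.
Lemma qpow0 x : qpow x 0 = qone. Proof. by []. Qed.
Lemma qpowD x n k : qpow x (n + k) = qm (qpow x n) (qpow x k).
Proof. elim: n => [|n IH]; first by rewrite add0n qpow0 qmul1.
by rewrite addSn !qpowS IH qmulA. Qed.
Lemma qpow_mul x y n : qpow (qm x y) n = qm (qpow x n) (qpow y n).
Proof. elim: n => [|n IH]; first by rewrite !qpow0 qmul1.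
rewrite !qpowS IH. qring. Qed.
Lemma qpow_conj x n : qconj (qpow x n) = qpow (qconj x) n.
Proof. elim: n => [|n IH]; first by qring. by rewrite !qpowS qconj_mul IH. Qed.
Lemma qpow_sq x n : qsq d (qpow x n) = qpow (qsq d x) n.
Proof. elim: n => [|n IH]; first by qring. by rewrite !qpowS qsq_mul IH. Qed.
Lemma qpow_inv x y n : qm x y = qone -> qm (qpow x n) (qpow y n) = qone.
Proof. by move=> H; rewrite -qpow_mul H; elim: n => // n IH; rewrite qpowS IH qmul1. Qed.
Lemma qnorm_pow x n : qnorm d (qpow x n) = (qnorm d x)^+n.
Proof. elim: n => [|n IH]; first by qunf; rewrite expr0; ring.
by rewrite qpowS qnorm_mul IH exprS. Qed.

End QF.

Section QF2.
Variable d : nat.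
Local Notation D := (d%:R : rat).
Local Notation qm := (qmul d).
Ltac qunf := rewrite /qsq /qmul /qadd /qscale /qone /qzero /qtr /qnorm /qconj /Delta /=.
Ltac qcase := repeat match goal with | x : qf |- _ => destruct x end.
Ltac qring := qcase; qunf; try (congr pair); ring.
Lemma Delta_linr c l x m y : Delta c (qadd (qscale l x) (qscale m y)) = l * Delta c x + m * Delta c y.
Proof. qring. Qed.
Lemma Delta_linl c l x m y : Delta (qadd (qscale l x) (qscale m y)) c = l * Delta x c + m * Delta y c.
Proof. qring. Qed.
Lemma det_id c e y : qtr (qm c qone) * qtr (qm e y) - qtr (qm c y) * qtr (qm e qone) =
  - (4 * D) * Delta c e * y.2.
Proof. qring. Qed.
Lemma sq_one : qsq d qone = qone. Proof. qring. Qed.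
Lemma qmul0 x : qm x qzero = qzero. Proof. qring. Qed.
Lemma qmulsq_inv a w winv : qm w winv = qone -> qm (qm a (qsq d w)) (qsq d winv) = a.
Proof. move=> H. rewrite -qmulA -qsq_mul H sq_one qmulx1 //. Qed.
End QF2.
Lemma qmulACA d a b c e : qmul d (qmul d a b) (qmul d c e) = qmul d (qmul d a c) (qmul d b e).
Proof. case: a => ? ?; case: b => ? ?; case: c => ? ?; case: e => ? ?; rewrite /qmul /=; congr pair; ring. Qed.
Lemma qsq_one d : qsq d qone = qone. Proof. rewrite /qsq /qmul /qone /=; congr pair; ring. Qed.
Lemma qadd_s0l (x y : qf) : qadd (qscale 0 x) y = y.
Proof. case: x => ? ?; case: y => ? ?; rewrite /qadd /qscale /=; congr pair; ring. Qed.
Lemma qadd_s0r (x y : qf) : qadd x (qscale 0 y) = x.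
Proof. case: x => ? ?; case: y => ? ?; rewrite /qadd /qscale /=; congr pair; ring. Qed.
Lemma unit_ne0 d u v : qmul d u v = qone -> u <> qzero.
Proof. move=> H E; move: H; rewrite E /qmul /qzero /qone /=. case=> H _; move: H; rewrite !mul0r mulr0 addr0 => /esym /eqP; rewrite oner_eq0. by []. Qed.
Lemma conj2 d a x : (qmul d (qconj a) (qconj x)).2 = - (qmul d a x).2.
Proof. case: a => ? ?; case: x => ? ?; rewrite /qmul /qconj /=; ring. Qed.

Set Implicit Arguments. Unset Strict Implicit. Unset Printing Implicit Defensive.

Ltac qunf := rewrite /qsq /qmul /qadd /qscale /qone /qzero /qtr /qnorm /qconj /Delta /=.
Ltac qcase := repeat match goal with | x : qf |- _ => destruct x end.

Lemma aux_pos (D c1 c2 e1 e2 : rat) : 0 < D -> 0 < c1 -> 0 < e1 -> 0 < c1^+2 - D * c2^+2 ->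
   0 < e1^+2 - D * e2^+2 -> 0 < c1 * e1 + D * (c2 * e2) /\ 0 < c1 * e1 - D * (c2 * e2).
Proof.
move=> HD H1 H2 H3 H4.
have H5 : (D * (c2 * e2))^+2 < (c1 * e1)^+2.
  have -> : (D * (c2 * e2))^+2 = (D * c2^+2) * (D * e2^+2) by ring.
  have Hc : 0 <= D * c2^+2 by nra.
  have He : 0 <= D * e2^+2 by nra.
  nra.
have H6 : 0 < c1 * e1 by nra.
split; nra.
Qed.
Arguments aux_pos {D c1 c2 e1 e2}.

Section Gen.
Variable d : nat.
Hypothesis Hd : (0 < d)%N.
Local Notation D := (d%:R : rat).
Local Notation qm := (qmul d).
Lemma Dpos : 0 < D. Proof. by rewrite ltr0n. Qed.

Lemma totposE a : totpos d a <-> 0 < a.1 /\ 0 < a.1^+2 - D * a.2^+2.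
Proof. rewrite /totpos /qtr /qnorm; split=> [[H1 H2]|[H1 H2]]; split=> //; lra. Qed.

Lemma totpos_mul c e : totpos d c -> totpos d e -> totpos d (qm c e).
Proof.
move=> /totposE [H1 H2] /totposE [H3 H4]; apply/totposE.
have [H5 _] := aux_pos Dpos H1 H3 H2 H4.
split; first by qcase; move: H5; qunf.
rewrite -/(qnorm d (qm c e)) qnorm_mul /qnorm. nra.
Qed.

Lemma totpos_add c e : totpos d c -> totpos d e -> totpos d (qadd c e).
Proof.
move=> /totposE [H1 H2] /totposE [H3 H4]; apply/totposE.
have [_ H5] := aux_pos Dpos H1 H3 H2 H4.
qcase; move: H1 H2 H3 H4 H5; qunf => H1 H2 H3 H4 H5; split; nra.
Qed.

Lemma totpos_scale l c : 0 < l -> totpos d c -> totpos d (qscale l c).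
Proof.
move=> Hl /totposE [H1 H2]; apply/totposE; qcase; move: H1 H2; qunf => H1 H2.
split; first nra.
have -> : (l * r) ^+ 2 - D * (l * r0) ^+ 2 = l^+2 * (r ^+ 2 - D * r0 ^+ 2) by ring.
apply: mulr_gt0 => //; nra.
Qed.

Lemma qnorm_ne0 x : qnorm d x != 0 -> 0 < x.1^+2 + D * x.2^+2.
Proof.
have HD := Dpos. qcase; qunf => H.
have [Hr|Hr] := eqVneq r 0; last by nra.
subst r. have [Hr0|Hr0] := eqVneq r0 0; last by nra.
by subst r0; move: H; rewrite !expr2 !mul0r mulr0 subrr eqxx.
Qed.

Lemma totpos_sq u : qnorm d u != 0 -> totpos d (qsq d u).
Proof.
move=> H; split.
  have := qnorm_ne0 H. qcase; qunf => H1. lra.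
rewrite qnorm_sq. by rewrite lt_def sqrf_eq0 H sqr_ge0.
Qed.

Lemma totpos_conj a : totpos d a -> totpos d (qconj a).
Proof. by case=> H1 H2; split; rewrite ?qtr_conj ?qnorm_conj. Qed.

Lemma totpos_mulsq a u : totpos d a -> qnorm d u != 0 -> totpos d (qm a (qsq d u)).
Proof. move=> Ha Hu; apply: totpos_mul => //; exact: totpos_sq. Qed.

Lemma inOK_conj x : inOK d x -> inOK d (qconj x).
Proof. by case=> H1 H2; split; rewrite ?qtr_conj ?qnorm_conj. Qed.

Lemma unit_norm u v : inOK d u -> inOK d v -> qm u v = qone ->
  qnorm d u = 1 \/ qnorm d u = -1.
Proof.
move=> [_ /intrP [a Ha]] [_ /intrP [b Hb]] Huv.
have : qnorm d (qm u v) = 1 by rewrite Huv /qnorm /qone /=; ring.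
rewrite qnorm_mul Ha Hb -intrM => H.
have : (a * b)%:~R = (1%:~R : rat) by rewrite H.
move/intr_inj => Hab.
have Hn : `|a| * `|b| = 1 by rewrite -normrM Hab.
have Ha1 : 1 <= `|a| by nia.
have Hb1 : 1 <= `|b| by nia.
have : `|a| <= 1 by nia.
have : a = 1 \/ a = -1 by lia.
by case=> ->; [left|right].
Qed.

Lemma is_mu_uniq a m1 m2 : is_mu d a m1 -> is_mu d a m2 -> m1 = m2.
Proof.
move=> [[x [Hx [Hx0 Hx1]]] H1] [[y [Hy [Hy0 Hy1]]] H2].
apply/eqP; rewrite eq_le; apply/andP; split.
  by rewrite -Hy1; apply: H1.
by rewrite -Hx1; apply: H2.
Qed.

Lemma mulC_scale l x y : qm (qscale l x) y = qscale l (qm x y). Proof. qcase; qunf; congr pair; ring. Qed.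

Lemma qmul_conj_self x : qm x (qconj x) = (qnorm d x, 0). Proof. qcase; qunf; congr pair; ring. Qed.

Lemma det2 b c y : qtr b = qtr c -> qtr (qm b y) = qtr (qm c y) -> y.2 != 0 -> b = c.
Proof.
have HD := Dpos.
case: b => b1 b2; case: c => c1 c2; case: y => y1 y2; qunf => H1 H2 H3.
have E1 : b1 = c1 by lra.
subst c1. congr pair.
have E : b2 * (D * y2) = c2 * (D * y2) by lra.
apply: (mulIf _ E). by rewrite mulf_neq0 // gt_eqF.
Qed.

Lemma grow a E : totpos d a -> qnorm d E = 1 -> 1 <= E.1 -> 0 < E.2 ->
  exists n, 0 <= (qm a (qpow d E n)).2.
Proof.
move=> /totposE [Ha1 Ha2]; case: E => e1 e2 HN /= HE1 HE2.
have HD := Dpos.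
have inv : forall n, 1 <= (qpow d (e1, e2) n).1 /\ n%:R * e2 <= (qpow d (e1, e2) n).2 /\ qnorm d (qpow d (e1, e2) n) = 1.
  elim=> [|n [IH1 [IH2 IH3]]].
    rewrite qpow0 /qone /=; split => //; split; first by rewrite mul0r.
    by rewrite /qnorm /=; rewrite expr1n expr0n /= mulr0 subr0.
  rewrite qpowS; split; [|split]; last by rewrite qnorm_mul HN IH3 mulr1.
    move: IH1 IH2; case: (qpow d (e1, e2) n) => z1 z2; rewrite /qmul /= => H1 H2.
    have Hn : 0 <= n%:R :> rat by rewrite ler0n.
    have Hz2 : 0 <= z2 by nra.
    have : 0 <= d%:R * (e2 * z2) by apply: mulr_ge0; [lra|apply: mulr_ge0; lra].
    nra.
  move: IH1 IH2; case: (qpow d (e1, e2) n) => z1 z2; rewrite /qmul /= => H1 H2.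
  have Hn : 0 <= n%:R :> rat by rewrite ler0n.
  have : 0 <= z2 by nra.
  rewrite -natr1. nra.
set N := a.1 ^+ 2 - D * a.2 ^+ 2.
set c := 1 + a.2^+2 / N.
have Hc : 0 <= c / e2.
  apply: divr_ge0; last lra. rewrite /c; apply: addr_ge0 => //; apply: divr_ge0; [exact: sqr_ge0|rewrite /N; lra].
have := archi_boundP Hc. set n := Num.Def.archi_bound _ => Hn.
exists n.
have [H1 [H2 H3]] := inv n.
move: H1 H2 H3; case: (qpow d (e1, e2) n) => z1 z2 /= H1 H2 H3.
have Hz2 : c < z2.
  have := ltr_pM2r HE2 (c / e2) n%:R. rewrite Hn divfK ?gt_eqF // => /esym H. lra.
have Hc1 : a.2^+2 / N < z2 by rewrite /c in Hz2; lra.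
have Hc1' : 1 <= c by rewrite /c; apply: ler_wpDr => //; apply: divr_ge0; [exact: sqr_ge0|rewrite /N; lra].
have Hz2p : 1 < z2 by lra.
have Hz22 : a.2 ^+2 < z2^+2 * N.
  have HN0 : 0 < N by rewrite /N; lra.
  rewrite ltr_pdivrMr // in Hc1.
  have E : z2 * N <= z2^+2 * N by apply: ler_wpM2r; [lra| nra].
  lra.
move: Hz22 H3; rewrite /N /qnorm /= => Hz H3.
rewrite /qmul /=.
have [Ha2p|Ha2n] := lerP 0 a.2.
  have : 0 <= a.1 * z2 by nra.
  have : 0 <= a.2 * z1 by nra.
  lra.
have Hsq : (a.2 * z1)^+2 <= (a.1 * z2)^+2.
  have -> : (a.2 * z1)^+2 = a.2^+2 * z1^+2 by ring.
  have -> : z1^+2 = 1 + D * z2^+2 by lra.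
  nra.
have HX : 0 < a.1 * z2 by nra.
have HY : 0 < - (a.2 * z1) by nra.
have HXY : - (a.2 * z1) <= a.1 * z2.
  rewrite -(ler_pXn2r (n := 2)) ?nnegrE //; try lra.
lra.
Qed.

Lemma cone_min a c e l m V : a = qadd (qscale l c) (qscale m e) -> 0 <= l -> 0 <= m ->
  (forall x, inOK d x -> x <> qzero -> qtr (qm c (qsq d V)) <= qtr (qm c (qsq d x))) ->
  (forall x, inOK d x -> x <> qzero -> qtr (qm e (qsq d V)) <= qtr (qm e (qsq d x))) ->
  forall x, inOK d x -> x <> qzero -> qtr (qm a (qsq d V)) <= qtr (qm a (qsq d x)).
Proof.
move=> -> Hl Hm Hc He x Hx Hx0. rewrite !tr_lin.
apply: lerD; apply: ler_wpM2l => //; [exact: Hc | exact: He].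
Qed.

Lemma mu_of a V : inOK d V -> V <> qzero ->
  (forall x, inOK d x -> x <> qzero -> qtr (qm a (qsq d V)) <= qtr (qm a (qsq d x))) ->
  is_mu d a (qtr (qm a (qsq d V))).
Proof. move=> HV HV0 H; split; first by exists V. exact: H. Qed.

Lemma qsq0 : qsq d qzero = qzero. Proof. by rewrite /qsq qmul0. Qed.
Lemma tr0 a : qtr (qm a qzero) = 0. Proof. by rewrite qmul0 /qtr /qzero /= mulr0. Qed.

Lemma cone_notperf a c e l m V : a = qadd (qscale l c) (qscale m e) -> 0 < l -> 0 < m ->
  totpos d c -> totpos d e -> Delta c e != 0 -> inOK d V -> V <> qzero ->
  0 < qtr (qm c (qsq d V)) -> 0 < qtr (qm e (qsq d V)) ->
  (forall x, inOK d x -> x <> qzero -> qtr (qm c (qsq d V)) <= qtr (qm c (qsq d x))) ->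
  (forall x, inOK d x -> x <> qzero -> qtr (qm e (qsq d V)) <= qtr (qm e (qsq d x))) ->
  ~ perfect d a.
Proof.
move=> Ha Hl Hm Hc He HDe HV HV0 HTc HTe Hcm Hem [_ [m0 [Hmu Hperf]]].
have Hmin := cone_min Ha (ltW Hl) (ltW Hm) Hcm Hem.
have Em0 : m0 = qtr (qm a (qsq d V)) by apply: (is_mu_uniq Hmu); exact: mu_of.
set Tc := qtr (qm c (qsq d V)) in HTc Em0 *. set Te := qtr (qm e (qsq d V)) in HTe Em0 *.
have Em : m0 = l * Tc + m * Te by rewrite Em0 Ha tr_lin.
pose s : rat := m0 / (l * Tc + 2 * m * Te).
have Hden : 0 < l * Tc + 2 * m * Te by nra.
have Hm0 : 0 < m0 by nra.
have Hs0 : 0 < s by rewrite /s; apply: divr_gt0.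
pose b := qscale s (qadd (qscale l c) (qscale (2 * m) e)).
have Hb : totpos d b.
  apply: totpos_scale => //.
  apply: totpos_add; apply: totpos_scale => //; nra.
have Hbv : forall v, in_min_vectors d a m0 v -> qtr (qm b (qsq d v)) = m0.
  move=> v [Hv Hva].
  have Hv0 : v <> qzero by move=> E; move: Hva; rewrite E qsq0 tr0; lra.
  have H1 := Hcm v Hv Hv0. have H2 := Hem v Hv Hv0. rewrite -/Tc in H1. rewrite -/Te in H2.
  move: Hva; rewrite Ha tr_lin -/Tc -/Te => Hva.
  have E1 : qtr (qm c (qsq d v)) = Tc by nra.
  have E2 : qtr (qm e (qsq d v)) = Te by nra.
  by rewrite /b tr_scale tr_lin E1 E2 /s divfK // gt_eqF.
have Eb := Hperf b Hb Hbv.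
have K1 : Delta c a = m * Delta c e by rewrite Ha Delta_linr /Delta; ring.
have K2 : Delta c b = s * (2 * m) * Delta c e.
  rewrite /b. have -> : forall k x, qscale k x = qadd (qscale k x) (qscale 0 x) by move=> k [x1 x2]; rewrite /qadd/qscale /=; congr pair; ring.
  rewrite Delta_linr Delta_linr /Delta /=; ring.
have K3 : Delta a e = l * Delta c e by rewrite Ha Delta_linl /Delta; ring.
have K4 : Delta b e = s * l * Delta c e.
  rewrite /b. have -> : forall k x, qscale k x = qadd (qscale k x) (qscale 0 x) by move=> k [x1 x2]; rewrite /qadd/qscale /=; congr pair; ring.
  rewrite Delta_linl Delta_linl /Delta /=; ring.
rewrite Eb in K2 K4.
have Hs1 : s * l = l.
  apply: (mulIf HDe). by rewrite -K4 K3.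
have Hs2 : s * (2 * m) = m.
  apply: (mulIf HDe). by rewrite -K2 K1.
move: Hs1 Hs2 Hl Hm; clear. move: s => s. nra.
Qed.

Lemma perfect_unit a w winv : (forall x y, inOK d x -> inOK d y -> inOK d (qm x y)) ->
  perfect d a -> inOK d w -> inOK d winv -> qm w winv = qone ->
  perfect d (qm a (qsq d w)).
Proof.
move=> OKm [Ha [m [[[x0 [Hx0 [Hx00 Hx0m]]] Hmin] Hperf]]] Hw Hwi Hww.
have Hn := unit_norm Hw Hwi Hww.
have Hwn : qnorm d w != 0 by case: Hn => ->; rewrite ?oppr_eq0 oner_eq0.
have Hwinv : qm winv w = qone by rewrite qmulC.
have Hn' := unit_norm Hwi Hw Hwinv.
have Hwn' : qnorm d winv != 0 by case: Hn' => ->; rewrite ?oppr_eq0 oner_eq0.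
have Hcancel : forall x, qm w (qm winv x) = x by move=> x; rewrite qmulA Hww qmul1.
have Hcancel' : forall x, qm winv (qm w x) = x by move=> x; rewrite qmulA Hwinv qmul1.
split; first exact: totpos_mulsq.
exists m; split.
  split.
    exists (qm winv x0); split; first exact: OKm.
    split; first by move=> E; apply: Hx00; rewrite -(Hcancel x0) E qmul0.
    by rewrite trmulsq Hcancel.
  move=> x Hx Hxn; rewrite trmulsq; apply: Hmin; first exact: OKm.
  by move=> E; apply: Hxn; rewrite -(Hcancel' x) E qmul0.
move=> b Hb Hbv.
have Hb' : totpos d (qm b (qsq d winv)) by apply: totpos_mulsq.
have := Hperf _ Hb'.
have H : (forall v, in_min_vectors d a m v -> qtr (qm (qm b (qsq d winv)) (qsq d v)) = m).
  move=> v [Hv Hva]; rewrite trmulsq; apply: Hbv; split; first exact: OKm.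
  by rewrite trmulsq Hcancel.
move/(_ H) => <-. by rewrite qmulsq_inv.
Qed.
End Gen.

Lemma ivt (h : nat -> bool) n : h 0 -> ~~ h n -> exists i, h i /\ ~~ h i.+1.
Proof.
elim: n => [|n IH] H0 Hn; first by rewrite H0 in Hn.
case Hh: (h n); last by apply: IH => //; rewrite Hh.
by exists n; split.
Qed.
Section I.
Variables (t rho : int).
Hypotheses (Ht2 : 2 <= t) (Hr0 : rho != 0) (Hrt : 2 * `|rho| <= t) (H1r : `|2*(1-rho)| <= t).
Lemma aux1 (s q : int) : (s != 0) || (q != 0) -> 1 <= s^+2 + q^+2 - `|s*q|.
Proof. move=> H. case/orP: H => H; nia. Qed.
Lemma aux2 (t' c s q : int) : 0 < t' -> `|c| <= t' ->
  t' * (s^+2 + q^+2 - `|s*q|) <= t'*(s^+2+q^+2) + c*s*q.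
Proof. move=> Ht Hc. nia. Qed.
Lemma G_ge (s q : int) : (s != 0) || (q != 0) -> t <= t*(s^+2+q^+2) + 2*(1-rho)*s*q.
Proof. move=> H; have := @aux1 s q H; have := @aux2 t (2*(1-rho)) s q. nia. Qed.
Lemma aux3 (s q : int) : 2 <= `|q| -> 3 <= s^+2 + q^+2 - `|s*q|.
Proof. move=> H. nia. Qed.
Lemma G_gt (s q : int) : 2 <= `|q| -> t < t*(s^+2+q^+2) + 2*(1-rho)*s*q.
Proof. move=> H; have := @aux3 s q H; have := @aux2 t (2*(1-rho)) s q. nia. Qed.
Lemma aux4 (s q : int) : 2 <= s^+2 + q^+2 - `|s*q| -> t < t*(s^+2+q^+2) + 2*(1-rho)*s*q.
Proof. move=> H; have := @aux2 t (2*(1-rho)) s q. nia. Qed.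
Lemma aux5 (s q : int) : s^+2 + q^+2 - `|s*q| <= 1 -> s != 0 -> q != 0 -> `|s| = 1 /\ `|q| = 1.
Proof. move=> H1 H2 H3. split; nia. Qed.
Lemma G_unit (s q : int) : t*(s^+2+q^+2) + 2*(1-rho)*s*q = t ->
  (s^+2 + t*s*q - rho*q^+2 = 1 \/ s^+2 + t*s*q - rho*q^+2 = -1) -> `|rho| != 1 ->
  q = 0 /\ (s = 1 \/ s = -1).
Proof.
move=> HG HN Hk.
have [Hq|Hq] := eqVneq q 0.
  subst q. split=> //. case: HN => HN; nia.
have [Hs|Hs] := eqVneq s 0.
  subst s. exfalso. have Hq1 : q^+2 = 1.
    have := @aux4 0 q. move: HG. nia.
  case: HN => HN; nia.
exfalso.
have H1 : s^+2 + q^+2 - `|s*q| <= 1.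
  have := @aux4 s q; move: HG; nia.
have [Hs1 Hq1] := @aux5 s q H1 Hs Hq.
have : (s = 1 \/ s = -1) /\ (q = 1 \/ q = -1) by split; lia.
case=> [[Hs'|Hs'] [Hq'|Hq']]; subst s q; case: HN => HN; nia.
Qed.
End I.

Section Core.
Variables (d : nat) (t rho kap sg tk : int) (b2 : rat).
Hypotheses (Hd : (1 < d)%N) (Hb2 : 0 < b2)
  (Hrel : (d%:R : rat) * b2^+2 = (t%:~R / 2)^+2 + rho%:~R)
  (Ht2 : 2 <= t) (Hk : 0 < kap) (Hsg : sg * sg = 1) (Hrho : rho = sg * kap)
  (Htk : t = tk * kap) (Hrt : 2 * kap <= t) (H1r : `|2*(1-rho)| <= t).
Local Notation D := (d%:R : rat).
Local Notation T := (t%:~R : rat).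
Local Notation P := (rho%:~R : rat).
Local Notation qm := (qmul d).

Definition ofst (s q : int) : qf := (s%:~R + q%:~R * (T/2), q%:~R * b2).
Definition beta := ofst 0 1.
Definition v1 : rat := (1 - P - T * (T/2)) / (2 * D * b2).
Definition N1 : qf := (T/2, v1).
Definition N0 := qconj N1.
Definition eps := ofst sg tk.
Definition ce := qconj eps.
Definition N2 := qm N0 (qsq d ce).
Definition N3 := qm N1 (qsq d ce).
Definition Gi (s q : int) : int := t*(s^+2+q^+2) + 2*(1-rho)*s*q.

Hypothesis HOK : forall x, inOK d x -> exists s q : int, x = ofst s q.

Lemma Hd0 : (0 < d)%N. Proof. exact: ltnW. Qed.
Lemma HDpos : 0 < D. Proof. by rewrite ltr0n Hd0. Qed.
Lemma Hb20 : b2 != 0. Proof. by rewrite gt_eqF. Qed.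
Lemma HDn : (T/2)^+2 + P != 0.
Proof. by rewrite -Hrel mulf_neq0 ?sqrf_eq0 ?Hb20 // gt_eqF // HDpos. Qed.
Lemma HDn4 : T^+2 + P * 4 != 0.
Proof.
have -> : T^+2 + P * 4 = 4 * ((T/2)^+2 + P) by (field; try done).
by rewrite mulf_neq0 ?HDn.
Qed.
Lemma HD : D = ((T/2)^+2 + P) / b2^+2.
Proof. rewrite -Hrel; (field; try done). exact: Hb20. Qed.

Lemma ofst_mul s q s' q' : qm (ofst s q) (ofst s' q') =
   ofst (s*s' + q*q'*rho) (s*q' + s'*q + q*q'*t).
Proof. have := Hb20. rewrite /ofst /qmul /= HD => H. congr pair; (field; try done). Qed.

Lemma ofst_conj s q : qconj (ofst s q) = ofst (s + q*t) (-q).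
Proof. rewrite /ofst /qconj /=; congr pair; (field; try done). Qed.
Lemma ofst_scale (z s q : int) : qscale z%:~R (ofst s q) = ofst (z*s) (z*q).
Proof. rewrite /ofst /qscale /=; congr pair; (field; try done). Qed.
Lemma ofst_tr s q : qtr (ofst s q) = (2*s + q*t)%:~R.
Proof. rewrite /ofst /qtr /=; (field; try done). Qed.
Lemma ofst_norm s q : qnorm d (ofst s q) = (s^+2 + t*s*q - rho*q^+2)%:~R.
Proof. have := Hb20. rewrite /ofst /qnorm /= HD => H. (field; try done). Qed.
Lemma inOK_ofst s q : inOK d (ofst s q).
Proof. by split; rewrite ?ofst_tr ?ofst_norm intr_int. Qed.
Lemma ofst_eq0 s q : ofst s q = qzero -> s = 0 /\ q = 0.
Proof.
rewrite /ofst /qzero => [[H1 H2]].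
have Hq : q = 0.
  move: H2 => /eqP; rewrite mulf_eq0 (negbTE Hb20) orbF intr_eq0 => /eqP //.
split=> //. move: H1; rewrite Hq mul0r addr0 => /eqP; rewrite intr_eq0 => /eqP //.
Qed.
Lemma ofst_one : ofst 1 0 = qone. Proof. rewrite /ofst /qone /=; congr pair; (field; try done). Qed.
Lemma ofst_inj s q s' q' : s = s' -> q = q' -> ofst s q = ofst s' q'. Proof. by move=> -> ->. Qed.

Lemma inOK_mul x y : inOK d x -> inOK d y -> inOK d (qm x y).
Proof.
move=> /HOK [s [q ->]] /HOK [s' [q' ->]]; rewrite ofst_mul; exact: inOK_ofst.
Qed.

Lemma G_eq s q : qtr (qm N1 (qsq d (ofst s q))) = (Gi s q)%:~R.
Proof.
have H1 := Hb20. have H2 := HDn.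
rewrite /N1 /v1 /ofst /Gi /qsq /qmul /qtr /= HD. field. by rewrite H1 HDn4.
Qed.

Lemma Hsg' : sg = 1 \/ sg = -1. Proof. nia. Qed.
Lemma Hr0 : rho != 0. Proof. apply/eqP => H; rewrite Hrho in H; nia. Qed.
Lemma absrho : `|rho| = kap. Proof. rewrite Hrho; case: Hsg' => ->; lia. Qed.
Lemma Hrt' : 2 * `|rho| <= t. Proof. by rewrite absrho. Qed.
Lemma tk2 : 2 <= tk. Proof. nia. Qed.
Lemma HTpos : 0 < T. Proof. rewrite ltr0z; lia. Qed.
Lemma HT2 : 2 <= T. Proof. by rewrite -[2]/((2%:Z)%:~R) ler_int. Qed.

Lemma R1 x : inOK d x -> x <> qzero -> T <= qtr (qm N1 (qsq d x)).
Proof.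
move=> /HOK [s [q ->]] Hx. rewrite G_eq ler_int /Gi.
apply: (G_ge Ht2 Hr0 Hrt' H1r).
case: (eqVneq s 0) => [Hs|//]; case: (eqVneq q 0) => [Hq|//].
by exfalso; apply: Hx; rewrite Hs Hq /ofst /qzero !mul0r !add0r.
Qed.

Lemma R1s s q : 2 <= `|q| -> T < qtr (qm N1 (qsq d (ofst s q))).
Proof. move=> Hq. rewrite G_eq ltr_int /Gi. exact: (G_gt Ht2 Hr0 Hrt' H1r). Qed.

Lemma R1u x : inOK d x -> qtr (qm N1 (qsq d x)) = T ->
  (qnorm d x = 1 \/ qnorm d x = -1) -> kap != 1 -> x = qone \/ x = ofst (-1) 0.
Proof.
move=> /HOK [s [q ->]]; rewrite G_eq ofst_norm => /intr_inj HG HN Hk1.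
have HN' : s^+2 + t*s*q - rho*q^+2 = 1 \/ s^+2 + t*s*q - rho*q^+2 = -1.
  case: HN => HN; [left|right]; apply: (intr_inj (R := rat)); rewrite HN //.
have Hk1' : `|rho| != 1 by rewrite absrho.
have [Hq [Hs|Hs]] := G_unit Ht2 Hr0 Hrt' H1r HG HN' Hk1'; subst; [left; exact: ofst_one|right=>//].
Qed.

Lemma G0_eq s q : qtr (qm N0 (qsq d (ofst s q))) = (Gi (s + q*t) (-q))%:~R.
Proof. by rewrite /N0 trconj qconj_sq ofst_conj G_eq. Qed.

Lemma R0 x : inOK d x -> x <> qzero -> T <= qtr (qm N0 (qsq d x)).
Proof.
move=> Hx Hx0; rewrite /N0 trconj qconj_sq; apply: R1; first exact: inOK_conj.
by move=> E; apply: Hx0; rewrite -(qconjK x) E /qconj /qzero /= oppr0.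
Qed.

Lemma N1one : qtr (qm N1 (qsq d qone)) = T.
Proof. rewrite -ofst_one G_eq /Gi; congr (_%:~R); ring. Qed.
Lemma N1beta : qtr (qm N1 (qsq d beta)) = T.
Proof. rewrite /beta G_eq /Gi; congr (_%:~R); ring. Qed.
Lemma N0one : qtr (qm N0 (qsq d qone)) = T.
Proof. by rewrite /N0 trconj qconj_sq /qone /qconj /= oppr0 -/qone N1one. Qed.
Lemma N0beta : qtr (qm N0 (qsq d (qconj beta))) = T.
Proof. by rewrite /N0 trconj qconj_sq qconjK N1beta. Qed.

Lemma v1neg : v1 < 0.
Proof.
have HD0 := HDpos.
have h : ((2*(1-rho))%:~R : rat) <= T by rewrite ler_int; lia.
have HT := HT2.
rewrite /v1 pmulr_llt0 ?invr_gt0; first by nra.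
apply: mulr_gt0 => //; apply: mulr_gt0 => //.
Qed.

Lemma N1pos : totpos d N1.
Proof.
have HD0 := HDpos. have HT := HT2. have Hb := Hb20.
have h1 : ((2*(1-rho))%:~R : rat) <= T by rewrite ler_int; lia.
have h2 : - T <= ((2*(1-rho))%:~R : rat) by rewrite -rmorphN ler_int; lia.
split; first by rewrite /qtr /N1 /=; lra.
have -> : qnorm d N1 = (T^+2 - (P - 1)^+2) / (4 * D * b2^+2).
  rewrite /qnorm /N1 /v1 /= HD. field. by rewrite Hb HDn4.
apply: divr_gt0; first nra.
apply: mulr_gt0; [nra| rewrite lt_def sqrf_eq0 Hb sqr_ge0 //].
Qed.
Lemma N0pos : totpos d N0. Proof. exact: totpos_conj N1pos. Qed.


Lemma bsq : qsq d beta = qscale kap%:~R eps.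
Proof. rewrite /qsq /beta ofst_mul /eps ofst_scale; apply: ofst_inj; rewrite ?Hrho ?Htk; ring. Qed.

Lemma eps_norm : qnorm d eps = 1.
Proof.
rewrite /eps ofst_norm.
have -> : sg^+2 + t*sg*tk - rho*tk^+2 = 1 by rewrite Htk Hrho; nia.
by [].
Qed.
Lemma qnorm_ce : qnorm d ce = 1. Proof. by rewrite /ce qnorm_conj eps_norm. Qed.
Lemma eps_inv : qm eps ce = qone.
Proof. by rewrite /ce qmul_conj_self eps_norm. Qed.
Lemma ce_eps : qm ce eps = qone. Proof. by rewrite qmulC eps_inv. Qed.
Lemma inOK_eps : inOK d eps. Proof. exact: inOK_ofst. Qed.
Lemma inOK_ce : inOK d ce. Proof. exact: inOK_conj inOK_eps. Qed.
Lemma ce_ofst : ce = ofst (sg + tk*t) (-tk). Proof. by rewrite /ce /eps ofst_conj. Qed.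

Lemma ce_cancel x : qm eps (qm ce x) = x. Proof. by rewrite qmulA eps_inv qmul1. Qed.
Lemma ce_ne0 x : x <> qzero -> qm ce x <> qzero.
Proof. by move=> Hx E; apply: Hx; rewrite -(ce_cancel x) E qmul0. Qed.

Lemma N2tr x : qtr (qm N2 (qsq d x)) = qtr (qm N0 (qsq d (qm ce x))).
Proof. by rewrite /N2 trmulsq. Qed.
Lemma N3tr x : qtr (qm N3 (qsq d x)) = qtr (qm N1 (qsq d (qm ce x))).
Proof. by rewrite /N3 trmulsq. Qed.
Lemma N2min x : inOK d x -> x <> qzero -> T <= qtr (qm N2 (qsq d x)).
Proof. move=> Hx Hx0; rewrite N2tr; apply: R0; [exact: inOK_mul inOK_ce Hx| exact: ce_ne0]. Qed.
Lemma N3min x : inOK d x -> x <> qzero -> T <= qtr (qm N3 (qsq d x)).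
Proof. move=> Hx Hx0; rewrite N3tr; apply: R1; [exact: inOK_mul inOK_ce Hx| exact: ce_ne0]. Qed.
Lemma N2eps : qtr (qm N2 (qsq d eps)) = T. Proof. by rewrite N2tr ce_eps N0one. Qed.
Lemma N3eps : qtr (qm N3 (qsq d eps)) = T. Proof. by rewrite N3tr ce_eps N1one. Qed.
Lemma N2beta : qtr (qm N2 (qsq d beta)) = T.
Proof.
rewrite N2tr ce_ofst /beta ofst_mul G0_eq; congr (_%:~R).
rewrite /Gi Hrho Htk; case: Hsg' => ->; ring.
Qed.
Lemma N2pos : totpos d N2.
Proof. apply: totpos_mulsq; [exact: Hd0|exact: N0pos|by rewrite qnorm_ce oner_eq0]. Qed.
Lemma N3pos : totpos d N3.
Proof. apply: totpos_mulsq; [exact: Hd0|exact: N1pos|by rewrite qnorm_ce oner_eq0]. Qed.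

Lemma D23 : 0 < Delta N2 N3.
Proof.
rewrite /N2 /N3 Delta_unit qnorm_ce expr1n mul1r /Delta /N0 /N1 /qconj /=.
have := v1neg; have := HTpos; nra.
Qed.

Lemma eps1pos : 1 <= eps.1.
Proof.
have HT := HT2.
have h : (2%:~R : rat) <= tk%:~R by rewrite ler_int tk2.
have h2 : (-1 : rat) <= sg%:~R by case: Hsg' => ->.
rewrite /eps /ofst /=. nra.
Qed.
Lemma eps2pos : 0 < eps.2.
Proof. rewrite /eps /ofst /=; apply: mulr_gt0 => //; rewrite ltr0z; have := tk2; lia. Qed.
Lemma E2pos : 0 < (qsq d eps).2.
Proof. have := eps1pos; have := eps2pos; case: eps => e1 e2 /= H1 H2; rewrite /qsq /qmul /=; nra. Qed.
Lemma E1ge : 1 <= (qsq d eps).1.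
Proof.
have := eps1pos; have := eps2pos; have := HDpos; case: eps => e1 e2 /= H1 H2 H3; rewrite /qsq /qmul /=.
have : 0 <= d%:R * (e2 * e2) :> rat by apply: mulr_ge0; [lra|apply: mulr_ge0; lra].
nra.
Qed.
Lemma E_norm : qnorm d (qsq d eps) = 1. Proof. by rewrite qnorm_sq eps_norm expr1n. Qed.

Lemma D12 : 0 < Delta N1 N2.
Proof.
have Hid := det_id d N1 N2 (qsq d eps).
have E1 : qtr (qm N1 qone) = T by rewrite -{1}(sq_one d) N1one.
have E2 : qtr (qm N2 (qsq d eps)) = T by exact: N2eps.
have G1 : T < qtr (qm N1 (qsq d eps)).
  apply: R1s. have := tk2; lia.
have E3 : qtr (qm N2 qone) = qtr (qm N1 (qsq d eps)).
  rewrite -{1}(sq_one d) N2tr qmulx1 /N0 trconj qconj_sq /ce qconjK //.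
rewrite E1 E2 E3 in Hid.
have HT := HTpos. have HE := E2pos. have HD0 := HDpos.
set G := qtr (qm N1 (qsq d eps)) in G1 Hid.
have : 0 < Delta N1 N2 * (qsq d eps).2.
  have : T * T - G * G < 0 by nra.
  rewrite Hid. nra.
move=> H. by rewrite (pmulr_lgt0 _ HE) in H.
Qed.


Lemma inOK_one : inOK d qone. Proof. rewrite -ofst_one; exact: inOK_ofst. Qed.
Lemma inOK_pow x n : inOK d x -> inOK d (qpow d x n).
Proof. move=> Hx; elim: n => [|n IH]; [exact: inOK_one| rewrite qpowS; exact: inOK_mul]. Qed.

Lemma Delta_N0_ge y : 0 < y.1 -> y.2 <= 0 -> 0 <= Delta N0 y.
Proof. have := v1neg; have := HTpos; rewrite /Delta /N0 /N1 /qconj /=; nra. Qed.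
Lemma Delta_N1_lt y : 0 < y.1 -> 0 <= y.2 -> Delta N1 y < 0.
Proof. have := v1neg; have := HTpos; rewrite /Delta /N1 /=; nra. Qed.

Lemma normalize a : totpos d a -> exists w winv, [/\ inOK d w, inOK d winv, qm w winv = qone,
   0 <= Delta N1 (qm a (qsq d w)) & 0 < Delta (qm a (qsq d w)) N3].
Proof.
move=> Ha.
set E := qsq d eps. set E' := qsq d ce.
have HE'E : qm E' E = qone by rewrite /E /E' -qsq_mul ce_eps qsq_one.
have HEE' : qm E E' = qone by rewrite qmulC.
have [n1 Hn1] := grow Hd0 (totpos_conj Ha) E_norm E1ge E2pos.
have Hn1' : (qm a (qpow d E' n1)).2 <= 0.
  have -> : qm a (qpow d E' n1) = qm (qconj (qconj a)) (qconj (qpow d E n1)).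
    by rewrite qconjK qpow_conj /E /E' qconj_sq.
  rewrite conj2; lra.
have [n2 Hn2] := grow Hd0 Ha E_norm E1ge E2pos.
have HcePn : forall k, qnorm d (qpow d ce k) != 0.
  by move=> k; rewrite qnorm_pow qnorm_ce expr1n oner_eq0.
have HepsPn : forall k, qnorm d (qpow d eps k) != 0.
  by move=> k; rewrite qnorm_pow eps_norm expr1n oner_eq0.
pose c0 := qm a (qpow d E' n1.+1).
have Hc0 : totpos d c0 by rewrite /c0 /E' -qpow_sq; apply: totpos_mulsq => //; exact: Hd0.
pose h i := 0 <= Delta N1 (qm c0 (qpow d E i)).
have h0 : h 0.
  rewrite /h qpow0 qmulx1.
  have K : Delta N2 c0 = Delta N0 (qm a (qpow d E' n1)).
    have := Delta_unit d N2 c0 eps. rewrite eps_norm expr1n mul1r => <-.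
    congr Delta.
      by rewrite /N2 -qmulA -qsq_mul ce_eps qsq_one qmulx1.
    by rewrite /c0 qpowS -/E' -qmulA -/E [qm E' _]qmulC -qmulA HE'E qmulx1.
  have Hy : totpos d (qm a (qpow d E' n1)) by rewrite /E' -qpow_sq; apply: totpos_mulsq => //; exact: Hd0.
  have K2 : 0 <= Delta N2 c0.
    rewrite K; apply: Delta_N0_ge; last exact: Hn1'.
    by case: Hy => Hy1 _; move: Hy1; rewrite /qtr /qmul /=; lra.
  have Hid := Delta_id N1 N2 c0.
  have H12 := D12.
  have P1 : 0 < N1.1 by case: N1pos; rewrite /qtr; lra.
  have P2 : 0 < N2.1 by case: N2pos; rewrite /qtr; lra.
  have P3 : 0 < c0.1 by case: Hc0; rewrite /qtr; lra.
  rewrite (Delta_anti c0 N1) in Hid.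
  nra.
have hn : ~~ h (n1.+1 + n2).
  rewrite /h -ltNge /c0 qpowD -qmulA [qm (qpow d E' _) _]qmulA qpow_inv ?qmul1 //.
  have Hy : totpos d (qm a (qpow d E n2)) by rewrite /E -qpow_sq; apply: totpos_mulsq => //; exact: Hd0.
  apply: Delta_N1_lt; last exact: Hn2.
  by case: Hy => Hy1 _; move: Hy1; rewrite /qtr /qmul /=; lra.
have [i [Hi Hi1]] := ivt h0 hn.
exists (qm (qpow d ce n1.+1) (qpow d eps i)), (qm (qpow d eps n1.+1) (qpow d ce i)).
have Ea : qm a (qsq d (qm (qpow d ce n1.+1) (qpow d eps i))) = qm c0 (qpow d E i).
  by rewrite qsq_mul !qpow_sq -/E -/E' qmulA.
split.
- apply: inOK_mul; apply: inOK_pow; [exact: inOK_ce|exact: inOK_eps].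
- apply: inOK_mul; apply: inOK_pow; [exact: inOK_eps|exact: inOK_ce].
- by rewrite qmulACA (qpow_inv _ _ _ _ ce_eps) (qpow_inv _ _ _ _ eps_inv) qmul1.
- by rewrite Ea.
rewrite Ea.
have := Delta_unit d (qm c0 (qpow d E i)) N3 eps. rewrite eps_norm expr1n mul1r -/E => <-.
have -> : qm N3 E = N1 by rewrite /N3 -qmulA -/E' HE'E qmulx1.
rewrite Delta_anti -qmulA [qm (qpow d E i) E]qmulC -qpowS.
by rewrite oppr_gt0 ltNge.
Qed.

Lemma cone a0 : 0 <= Delta N1 a0 -> 0 < Delta a0 N3 ->
  (exists l m, [/\ 0 <= l, 0 <= m & a0 = qadd (qscale l N1) (qscale m N2)]) \/
  (exists l m, [/\ 0 < l, 0 < m & a0 = qadd (qscale l N2) (qscale m N3)]).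
Proof.
move=> H1 H3. have H12 := D12. have H23 := D23.
case: (lerP 0 (Delta a0 N2)) => H2.
  left; exists (Delta a0 N2 / Delta N1 N2), (Delta N1 a0 / Delta N1 N2); split.
  - by apply: divr_ge0 => //; lra.
  - by apply: divr_ge0 => //; lra.
  - by apply: cramer; rewrite gt_eqF.
right; exists (Delta a0 N3 / Delta N2 N3), (Delta N2 a0 / Delta N2 N3); split.
- by apply: divr_gt0.
- by apply: divr_gt0 => //; rewrite Delta_anti; lra.
- by apply: cramer; rewrite gt_eqF.
Qed.

Lemma beta_ne0 : beta <> qzero. Proof. by move=> /ofst_eq0 [_ H]. Qed.
Lemma eps_ne0 : eps <> qzero. Proof. exact: unit_ne0 eps_inv. Qed.

Lemma min1 x : inOK d x -> x <> qzero -> qtr (qm N1 (qsq d beta)) <= qtr (qm N1 (qsq d x)).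
Proof. by rewrite N1beta; exact: R1. Qed.
Lemma min2b x : inOK d x -> x <> qzero -> qtr (qm N2 (qsq d beta)) <= qtr (qm N2 (qsq d x)).
Proof. by rewrite N2beta; exact: N2min. Qed.
Lemma min2e x : inOK d x -> x <> qzero -> qtr (qm N2 (qsq d eps)) <= qtr (qm N2 (qsq d x)).
Proof. by rewrite N2eps; exact: N2min. Qed.
Lemma min3 x : inOK d x -> x <> qzero -> qtr (qm N3 (qsq d eps)) <= qtr (qm N3 (qsq d x)).
Proof. by rewrite N3eps; exact: N3min. Qed.

Lemma wcancel w winv x : qm w winv = qone -> qm w (qm winv x) = x.
Proof. by move=> H; rewrite qmulA H qmul1. Qed.

Lemma UR : kap = 1 -> unit_reducible d.
Proof.
move=> Hk1 a Ha m Hm.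
have [w [winv [Hw Hwi Hww H1 H3]]] := normalize Ha.
set a0 := qm a (qsq d w) in H1 H3.
have key : exists V Vinv, [/\ inOK d V, inOK d Vinv, qm V Vinv = qone &
    forall x, inOK d x -> x <> qzero -> qtr (qm a0 (qsq d V)) <= qtr (qm a0 (qsq d x))].
  case: (cone H1 H3) => [[l [mu [Hl Hmu Ea]]]|[l [mu [Hl Hmu Ea]]]].
  - exists beta, (qscale (-sg)%:~R (qconj beta)). split.
    + exact: inOK_ofst.
    + rewrite /beta ofst_conj ofst_scale; exact: inOK_ofst.
    + rewrite /beta ofst_conj ofst_scale ofst_mul -ofst_one; apply: ofst_inj.
        rewrite Hrho Hk1; case: Hsg' => ->; ring.
      ring.
    + exact: cone_min Ea Hl Hmu min1 min2b.
  - exists eps, ce; split.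
    + exact: inOK_eps.
    + exact: inOK_ce.
    + exact: eps_inv.
    + exact: cone_min Ea (ltW Hl) (ltW Hmu) min2e min3.
have [V [Vinv [HV HVi HVV Hmin]]] := key.
have HwV : inOK d (qm w V) by exact: inOK_mul.
have Hu0 : qm w V <> qzero.
  by apply: (@unit_ne0 d _ (qm winv Vinv)); rewrite qmulACA Hww HVV qmul1.
exists (qm w V); split.
  split=> //; exists (qm winv Vinv); split; first exact: inOK_mul.
  by rewrite qmulACA Hww HVV qmul1.
apply/esym; apply: (is_mu_uniq Hm); split; first by exists (qm w V).
move=> x Hx Hx0.
rewrite -trmulsq -/a0 -(wcancel x Hww) -trmulsq -/a0.
apply: Hmin; first exact: inOK_mul.
move=> E; apply: Hx0; rewrite -(wcancel x Hww) E qmul0 //.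
Qed.

Lemma qsq_m1 : qsq d (ofst (-1) 0) = qone.
Proof. rewrite /qsq ofst_mul -ofst_one; apply: ofst_inj; ring. Qed.

Lemma NK : kap != 1 -> nK_eq2 d.
Proof.
move=> Hk1.
have HbS : (qsq d beta).2 != 0.
  rewrite bsq /qscale /= mulf_neq0 //; first by rewrite intr_eq0 gt_eqF.
  by rewrite gt_eqF // eps2pos.
have trN1 : qtr N1 = T by rewrite -N1one qsq_one qmulx1.
have trN0 : qtr N0 = T by rewrite -N0one qsq_one qmulx1.
have one0 : qone <> qzero := @unit_ne0 d _ _ (qmul1 d qone).
have PN1 : perfect d N1.
  split; first exact: N1pos. exists T; split.
    split; last exact: R1.
    by exists qone; split; [exact: inOK_one| split; [exact: one0 | exact: N1one]].
  move=> b Hb Hbv.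
  have e1 : qtr (qm b (qsq d qone)) = T by apply: Hbv; split; [exact: inOK_one| exact: N1one].
  have e2 : qtr (qm b (qsq d beta)) = T by apply: Hbv; split; [exact: inOK_ofst| exact: N1beta].
  apply: (det2 Hd0 (y := qsq d beta)) => //.
    by rewrite trN1 -e1 qsq_one qmulx1.
  by rewrite e2 N1beta.
have PN0 : perfect d N0.
  split; first exact: N0pos. exists T; split.
    split; last exact: R0.
    by exists qone; split; [exact: inOK_one| split; [exact: one0 | exact: N0one]].
  move=> b Hb Hbv.
  have e1 : qtr (qm b (qsq d qone)) = T by apply: Hbv; split; [exact: inOK_one| exact: N0one].
  have e2 : qtr (qm b (qsq d (qconj beta))) = T.
    by apply: Hbv; split; [apply: inOK_conj; exact: inOK_ofst| exact: N0beta].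
  apply: (det2 Hd0 (y := qsq d (qconj beta))) => //.
    by rewrite trN0 -e1 qsq_one qmulx1.
    by rewrite e2 N0beta.
  by rewrite -qconj_sq /qconj /= oppr_eq0.
exists N1, N0; split; [done|split; [done|split]].
  move=> [u [lam [[Hu [uinv [Huinv Huu]]] [Hlam E]]]].
  have A : forall x, qtr (qm N0 (qsq d x)) = lam * qtr (qm N1 (qsq d (qm u x))).
    by move=> x; rewrite E tr_scale trmulsq.
  have u0 : u <> qzero := @unit_ne0 d _ _ Huu.
  have ui0 : uinv <> qzero by apply: (@unit_ne0 d _ u); rewrite qmulC.
  have i1 : T = lam * qtr (qm N1 (qsq d u)) by rewrite -N0one A qmulx1.
  have i2 : T <= qtr (qm N1 (qsq d u)) := R1 Hu u0.
  have i3 : T <= lam * T.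
    have := R0 Huinv ui0. by rewrite A Huu N1one.
  have HT := HTpos.
  have Hl1 : lam = 1 by nra.
  have HX : qtr (qm N1 (qsq d u)) = T by move: i1; rewrite Hl1 mul1r.
  have Hsq : qsq d u = qone.
    by case: (R1u Hu HX (unit_norm Hd0 Hu Huinv Huu) Hk1) => ->; [exact: qsq_one| exact: qsq_m1].
  have := congr1 snd E; rewrite Hsq qmulx1 Hl1 /N0 /N1 /qconj /qscale /= mul1r => H.
  have := v1neg; lra.
move=> a Hpa.
have [w [winv [Hw Hwi Hww H1 H3]]] := normalize Hpa.1.
have Hp0 := perfect_unit Hd0 inOK_mul Hpa Hw Hwi Hww.
have Hwinv : qm winv w = qone by rewrite qmulC.
have Ea0 : a = qm (qm a (qsq d w)) (qsq d winv) by rewrite qmulsq_inv.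
have Ha0pos : totpos d (qm a (qsq d w)) := Hp0.1.
case: (cone H1 H3) => [[l [mu [Hl Hmu Ea]]]|[l [mu [Hl Hmu Ea]]]]; last first.
  exfalso; apply: (cone_notperf Hd0 Ea Hl Hmu N2pos N3pos (lt0r_neq0 D23) inOK_eps eps_ne0 _ _ min2e min3 Hp0).
    by rewrite N2eps HTpos.
  by rewrite N3eps HTpos.
have [Hl0|Hl0] := eqVneq l 0.
  right; exists (qm ce winv), mu.
  have Hmu0 : 0 < mu.
    rewrite lt_def Hmu andbT; apply/eqP => Hm0.
    move: Ha0pos; rewrite Ea Hl0 Hm0 qadd_s0l /qscale /totpos /qtr /=; rewrite !mul0r mulr0; lra.
  split; [|split=>//].
    split; first by apply: inOK_mul; [exact: inOK_ce|].
    exists (qm eps w); split; first by apply: inOK_mul; [exact: inOK_eps|].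
    by rewrite qmulACA ce_eps Hwinv qmul1.
  rewrite Ea0 Ea Hl0 qadd_s0l mulC_scale /N2 -qmulA -qsq_mul //.
have [Hm0|Hm0] := eqVneq mu 0.
  left; exists winv, l.
  split; [|split].
  - by split=> //; exists w.
  - by rewrite lt_def Hl0 Hl.
  - by rewrite Ea0 Ea Hm0 qadd_s0r mulC_scale.
exfalso.
have Hl' : 0 < l by rewrite lt_def Hl0 Hl.
have Hm' : 0 < mu by rewrite lt_def Hm0 Hmu.
apply: (cone_notperf Hd0 Ea Hl' Hm' N1pos N2pos (lt0r_neq0 D12) (inOK_ofst 0 1) beta_ne0 _ _ min1 min2b Hp0).
  by rewrite N1beta HTpos.
by rewrite N2beta HTpos.
Qed.

End Core.

Lemma sqf_int (d : nat) (y : rat) : (forall p : nat, prime p -> ~~ (p * p %| d)%N) ->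
  (d%:R * y^+2) \is a Num.int -> y \is a Num.int.
Proof.
move=> Hsq /intrP [k Hk].
have Hy := divq_num_den y.
set n := numq y in Hy. set e := denq y in Hy.
have He : 0 < e := denq_gt0 y.
have Hen : (e%:~R : rat) != 0 by rewrite intr_eq0 gt_eqF.
have H2 : (d%:R * (n%:~R)^+2 : rat) = k%:~R * (e%:~R)^+2.
  rewrite -Hk -{1}Hy. field. exact: Hen.
have Heq : (d%:Z * n^+2 = k * e^+2)%R.
  apply: (intr_inj (R := rat)).
  transitivity (d%:R * (n%:~R)^+2 : rat); first ring.
  rewrite H2; ring.
have Heqn : (d * `|n|%N ^ 2 = `|k|%N * `|e|%N ^ 2)%N.
  have := congr1 (fun z : int => `|z|%N) Heq. by rewrite !abszM /= !expnS !expn0 !muln1.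
have Hcop : coprime (`|e|%N ^ 2) (`|n|%N ^ 2).
  by rewrite coprime_pexpl // coprime_pexpr // coprime_sym coprime_num_den.
have Hdv : (`|e|%N ^ 2 %| d)%N.
  by rewrite -(Gauss_dvdl d Hcop) Heqn dvdn_mull.
have He1 : `|e|%N = 1%N.
  apply/eqP; rewrite eqn_leq absz_gt0 gt_eqF // andbT.
  rewrite leqNgt; apply/negP => He2.
  have Hp := pdiv_prime He2.
  move: (Hsq _ Hp) => /negP; apply.
  apply: dvdn_trans Hdv. rewrite expnS expn1. by apply: dvdn_mul; apply: pdiv_dvd.
have He1' : e = 1 by lia.
apply/intrP; exists n. by rewrite -Hy He1' divr1.
Qed.

Lemma main_core (d : nat) (t rho : int) (b2 : rat) :
  (1 < d)%N -> 0 < b2 -> (d%:R : rat) * b2^+2 = (t%:~R / 2)^+2 + rho%:~R ->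
  2 <= t -> `|2*(1-rho)| <= t ->
  (exists sg kap tk : int, [/\ 0 < kap, sg * sg = 1, rho = sg * kap, t = tk * kap & 2 * kap <= t]) ->
  (forall x, inOK d x -> exists s q : int, x = ofst t b2 s q) ->
  ~ unit_reducible d -> nK_eq2 d.
Proof.
move=> Hd Hb2 Hrel Ht2 Hr [sg [kap [tk [Hk Hsg Hrho Htk Hrt]]]] HOK HnUR.
have [Hk1|Hk1] := eqVneq kap 1.
  by exfalso; apply: HnUR; exact: (UR Hd Hb2 Hrel Ht2 Hk Hsg Hrho Htk Hrt Hr HOK Hk1).
exact: (NK Hd Hb2 Hrel Ht2 Hk Hsg Hrho Htk Hrt Hr HOK Hk1).
Qed.

Lemma inOK_AB (d : nat) x : (forall p : nat, prime p -> ~~ (p * p %| d)%N) -> inOK d x ->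
  exists A B N : int, x = (A%:~R / 2, B%:~R / 2) /\ A^+2 - d%:Z * B^+2 = 4 * N.
Proof.
move=> Hsq [/intrP [A HA] /intrP [N HN]].
have HB : (2 * x.2) \is a Num.int.
  apply: (sqf_int Hsq).
  have -> : (d%:R * (2 * x.2)^+2 : rat) = (A^+2 - 4 * N)%:~R.
    rewrite -[RHS]/((A^+2 - 4 * N)%:~R : rat).
    transitivity ((qtr x)^+2 - 4 * qnorm d x); first by rewrite /qtr /qnorm; ring.
    by rewrite HA HN; ring.
  exact: intr_int.
move/intrP: HB => [B HB].
exists A, B, N; split.
  case: x HA HB {HN} => x1 x2 /=; rewrite /qtr /= => HA HB.
  by congr pair; [rewrite -HA| rewrite -HB]; field.
apply: (intr_inj (R := rat)).
transitivity ((qtr x)^+2 - d%:R * (2 * x.2)^+2 : rat); first by rewrite HA HB; ring.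
transitivity (4 * qnorm d x); first by rewrite /qtr /qnorm; ring.
by rewrite HN; ring.
Qed.

Lemma HOK_A (d : nat) (m : int) : (forall p : nat, prime p -> ~~ (p * p %| d)%N) ->
  (d %% 4 == 2)%N || (d %% 4 == 3)%N ->
  forall x, inOK d x -> exists s q : int, x = ofst (2 * m) 1 s q.
Proof.
move=> Hsq Hd x Hx. have [A [B [N [-> HAB]]]] := inOK_AB Hsq Hx.
have [a [al [HA Hal]]] : exists a al : int, A = 2*a + al /\ (al = 0 \/ al = 1).
  by exists (A %/ 2)%Z, (A %% 2)%Z; lia.
have [b [be [HB Hbe]]] : exists b be : int, B = 2*b + be /\ (be = 0 \/ be = 1).
  by exists (B %/ 2)%Z, (B %% 2)%Z; lia.
have [e [f [Hde Hf]]] : exists e f : int, d%:Z = 4*e + f /\ (f = 2 \/ f = 3).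
  by exists ((d %/ 4)%N : int), ((d %% 4)%N : int); lia.
have [Hal0 Hbe0] : al = 0 /\ be = 0.
  move: HAB; rewrite HA HB Hde.
  by case: Hal => ->; case: Hbe => ->; case: Hf => -> H; lia.
exists (a - b * m), b. by rewrite /ofst HA HB Hal0 Hbe0; congr pair; field.
Qed.

Lemma HOK_B (d : nat) (m : int) : (forall p : nat, prime p -> ~~ (p * p %| d)%N) ->
  (d %% 4 == 1)%N -> odd `|m|%N ->
  forall x, inOK d x -> exists s q : int, x = ofst m (1/2) s q.
Proof.
move=> Hsq Hd Hm x Hx. have [A [B [N [-> HAB]]]] := inOK_AB Hsq Hx.
have [a [al [HA Hal]]] : exists a al : int, A = 2*a + al /\ (al = 0 \/ al = 1).
  by exists (A %/ 2)%Z, (A %% 2)%Z; lia.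
have [b [be [HB Hbe]]] : exists b be : int, B = 2*b + be /\ (be = 0 \/ be = 1).
  by exists (B %/ 2)%Z, (B %% 2)%Z; lia.
have [e Hde] : exists e : int, d%:Z = 4*e + 1.
  by exists ((d %/ 4)%N : int); lia.
have [c Hc] : exists c : int, m = 2 * c + 1.
  have Hm2 : (`|m| %% 2 = 1)%N by rewrite modn2 Hm.
  by exists (m %/ 2)%Z; lia.
have Hab : al = be.
  move: HAB; rewrite HA HB Hde.
  by case: Hal => ->; case: Hbe => -> H; lia.
exists (a - m * b - al * c), B. by rewrite /ofst HA HB -Hab Hc; congr pair; field.
Qed.

Unset Implicit Arguments.

Theorem theorem2 (d : nat) (m r : int) :
  (1 < d)%N ->
  (forall p : nat, prime p -> ~~ (p * p %| d)%N) ->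
  (d%:Z = m ^+ 2 + r) ->
  0 < m -> - m < r -> r <= m ->
  (r %| 4 * m)%Z ->
  ((d %% 4 == 2)%N || (d %% 4 == 3)%N || ((d %% 4 == 1)%N && odd `|m|%N)) ->
  ~ unit_reducible d ->
  nK_eq2 d.
Proof.
move=> Hd1 Hsq Hdm Hm Hr1 Hr2 Hdiv Hmod HnUR.
have [k Hk] := dvdzP Hdiv.
have Hr0 : r != 0 by apply/eqP => H; rewrite H mulr0 in Hk; lia.
have Hdq : (d%:R : rat) = m%:~R ^+ 2 + r%:~R.
  have := congr1 (fun z : int => (z%:~R : rat)) Hdm => /= H.
  transitivity ((d%:Z)%:~R : rat); first by ring.
  by rewrite H; ring.
case: (boolP ((d %% 4 == 1)%N && odd `|m|%N)) => HB.
  move/andP: HB => [Hd4 Hmo].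
  have [c Hc] : exists c : int, m = 2 * c + 1.
    have Hm2 : (`|m| %% 2 = 1)%N by rewrite modn2 Hmo.
    by exists (m %/ 2)%Z; lia.
  have [e Hde] : exists e : int, d%:Z = 4*e + 1 by exists ((d %/ 4)%N : int); lia.
  have [rh Hrh] : exists rh : int, r = 4 * rh.
    exists (e - c^+2 - c). move: Hdm; rewrite Hde Hc => H. lia.
  have Hmk : m = k * rh by move: Hk; rewrite Hrh; lia.
  have Hrel : (d%:R : rat) * (1/2)^+2 = (m%:~R / 2)^+2 + rh%:~R by rewrite Hdq Hrh; field.
  have Ht2 : 2 <= m by lia.
  have Hr : `|2 * (1 - rh)| <= m by lia.
  have Hex : exists sg kap tk : int, [/\ 0 < kap, sg * sg = 1, rh = sg * kap, m = tk * kap & 2 * kap <= m].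
    have [Hp|Hn] : 0 < rh \/ rh < 0 by lia.
      by exists 1; exists rh; exists k; split=> //; lia.
    by exists (-1); exists (- rh); exists (- k); split; [lia|lia|lia|rewrite Hmk; ring|lia].
  have Hb2 : (0 : rat) < 1/2 by [].
  exact: (@main_core d m rh (1/2) Hd1 Hb2 Hrel Ht2 Hr Hex (HOK_B Hsq Hd4 Hmo) HnUR).
have HA : (d %% 4 == 2)%N || (d %% 4 == 3)%N by move: Hmod HB; case: ((d %% 4 == 1)%N && _) => //; rewrite orbF.
have [j Hj] : exists j : int, 2 * m = j * r.
  have [j [ka [Hka Hk2]]] : exists j ka : int, k = 2 * j + ka /\ (ka = 0 \/ ka = 1).
    by exists (k %/ 2)%Z, (k %% 2)%Z; lia.
  exists j.
  have [a [b [Hab Hb]]] : exists a b : int, r = 4 * a + b /\ (b = 0 \/ b = 1 \/ b = 2 \/ b = 3).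
    by exists (r %/ 4)%Z, (r %% 4)%Z; lia.
  have [c [g [Hcg Hg]]] : exists c g : int, m = 2 * c + g /\ (g = 0 \/ g = 1).
    by exists (m %/ 2)%Z, (m %% 2)%Z; lia.
  have [e [f [Hde Hf]]] : exists e f : int, d%:Z = 4*e + f /\ (f = 2 \/ f = 3).
    by exists ((d %/ 4)%N : int), ((d %% 4)%N : int); lia.
  case: Hk2 => Hka0; last first.
    exfalso. move: Hk Hdm. rewrite Hka Hka0 Hab Hcg Hde.
    by case: Hb => [->|[->|[->|->]]]; case: Hg => ->; case: Hf => -> H1 H2; lia.
  move: Hk. rewrite Hka Hka0. lia.
have Hrel : (d%:R : rat) * 1^+2 = ((2 * m)%:~R / 2)^+2 + r%:~R by rewrite Hdq; field.
have Ht2 : 2 <= 2 * m by lia.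
have Hr : `|2 * (1 - r)| <= 2 * m by lia.
have Hex : exists sg kap tk : int, [/\ 0 < kap, sg * sg = 1, r = sg * kap, 2 * m = tk * kap & 2 * kap <= 2 * m].
  have [Hp|Hn] : 0 < r \/ r < 0 by lia.
    by exists 1; exists r; exists j; split=> //; lia.
  by exists (-1); exists (- r); exists (- j); split; [lia|lia|lia|rewrite Hj; ring|lia].
have Hb2 : (0 : rat) < 1 by [].
exact: (@main_core d (2 * m) r 1 Hd1 Hb2 Hrel Ht2 Hr Hex (HOK_A m Hsq HA) HnUR).
Qed.
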